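(* Let $g_{00},g_{11},g_{22},g_{33}$ solve system (SL) with positive initial data, and define $Ric_{11} = \frac{g_{11}^2-(g_{22}-g_{33})^2}{2g_{22}g_{33}}$, $Ric_{22} = \frac{g_{22}^2-(g_{11}+g_{33})^2}{2g_{11}g_{33}}$, $Ric_{33} = \frac{g_{33}^2-(g_{11}+g_{22})^2}{2g_{11}g_{22}}$, $S = -\frac{g_{11}^2+g_{22}^2+g_{33}^2+2(g_{11}g_{22}+g_{11}g_{33}-g_{22}g_{33})}{2g_{11}g_{22}g_{33}}$. Then as $t\to\infty$: $Ric_{11}/g_{11}\to 0$, $Ric_{22}\to -1$, $Ric_{33}\to-1$, and $S\to 0$.
   Context: Let $\det h = h_{00}h_{11}h_{22}h_{33}$, $\beta = \frac{1}{6(\det h)^2}$, and $p(x,y,z) = x^4 - x^3(y+z) + x^2yz + x(-y^3+y^2z+yz^2-z^3) + y^4 - y^3z - yz^3 + z^4$, $q(x,y,z) = 5x^4 - 3x^3(y+z) + x^2yz + x(y^3-y^2z-yz^2+z^3) - 3y^4 + 3y^3z + 3yz^3 - 3z^4$. System (SL): $\dot g_{00} = -\beta\,p(-g_{11},g_{22},g_{33})\,g_{00}^3$, $\dot g_{11} = -\beta\,q(-g_{11},g_{22},g_{33})\,g_{00}^2g_{11}$, $\dot g_{22} = -\beta\,q(g_{22},-g_{11},g_{33})\,g_{00}^2g_{22}$, $\dot g_{33} = -\beta\,q(g_{33},-g_{11},g_{22})\,g_{00}^2g_{33}$, with $g_{ii}(0)=h_{ii}>0$. This is Bach flow on $\mathbb{R}\times\widetilde{SL}(2,\mathbb{R})$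 in a diagonalizing left-invariant frame with structure matrix $E=\mathrm{diag}(-1,1,1)$; the displayed $Ric_{ii}$ and $S$ are the Ricci components and scalar curvature of the three-dimensional factor metric $\mathrm{diag}(g_{11},g_{22},g_{33})$ in that frame. *)

(* Defs.v *)
From Stdlib Require Import Reals Lra.
Open Scope R_scope.

Definition p_poly (x y z : R) : R :=
  x^4 - x^3*(y+z) + x^2*y*z + x*(- y^3 + y^2*z + y*z^2 - z^3)
  + y^4 - y^3*z - y*z^3 + z^4.

Definition q_poly (x y z : R) : R :=
  5*x^4 - 3*x^3*(y+z) + x^2*y*z + x*(y^3 - y^2*z - y*z^2 + z^3)
  - 3*y^4 + 3*y^3*z + 3*y*z^3 - 3*z^4.

(* beta = 1 / (6 (det h)^2), det h = h00 h11 h22 h33 *)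
Definition beta_of (h00 h11 h22 h33 : R) : R :=
  1 / (6 * (h00*h11*h22*h33)^2).

Definition Ric11 (g11 g22 g33 : R) : R :=
  (g11^2 - (g22 - g33)^2) / (2*g22*g33).
Definition Ric22 (g11 g22 g33 : R) : R :=
  (g22^2 - (g11 + g33)^2) / (2*g11*g33).
Definition Ric33 (g11 g22 g33 : R) : R :=
  (g33^2 - (g11 + g22)^2) / (2*g11*g22).
Definition Scal (g11 g22 g33 : R) : R :=
  - (g11^2 + g22^2 + g33^2 + 2*(g11*g22 + g11*g33 - g22*g33))
    / (2*g11*g22*g33).

Definition tends_at_infty (f : R -> R) (l : R) : Prop :=
  forall eps : R, eps > 0 -> exists T : R, forall t : R, t >= T -> Rabs (f t - l) < eps.

(* Main.v *)
Require Import Defs.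
From Stdlib Require Import Reals Lra Psatz.
From Coquelicot Require Import Coquelicot.
Open Scope R_scope.

Lemma mono_dec (f f' : R -> R) (T0 : R) :
  (forall t, T0 <= t -> derivable_pt_lim f t (f' t)) ->
  (forall t, T0 <= t -> f' t <= 0) ->
  forall s t, T0 <= s -> s <= t -> f t <= f s.
Proof.
  intros Hd Hn s t Hs Hst. destruct (Req_dec s t) as [->|Hne]; [lra|].
  destruct (MVT_cor2 f f' s t) as [c [Hc1 Hc2]]; [lra| intros; apply Hd; lra |].
  assert (f' c <= 0) by (apply Hn; lra). nra.
Qed.

Ltac rwD H := match type of H with is_derive ?f ?t ?l =>
  let E := fresh in assert (E : Derive (fun x => f x) t = l) by (apply is_derive_unique; exact H); rewrite E; clear E end.
Section T.
Variables (a b c : R -> R) (A B C : R) (t : R).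
Hypothesis (Ha : derivable_pt_lim a t A) (Hb : derivable_pt_lim b t B) (Hc : derivable_pt_lim c t C).

Lemma d_Phi : derivable_pt_lim (fun t => a t ^2 + (b t - c t)^2) t (2*a t*A + 2*(b t - c t)*(B-C)).
Proof.
  apply is_derive_Reals in Ha; apply is_derive_Reals in Hb; apply is_derive_Reals in Hc.
  apply is_derive_Reals. auto_derive.
  - repeat split; eexists; eassumption.
  - rwD Ha. rwD Hb. rwD Hc. ring.
Qed.

Lemma d_G : a t ^2 + (b t - c t)^2 <> 0 ->
  derivable_pt_lim (fun t => b t * c t / (a t ^2 + (b t - c t)^2)) t
   (((B * c t + b t * C) * (a t ^2 + (b t - c t)^2) - b t * c t * (2*a t*A + 2*(b t - c t)*(B-C)))
     / (a t ^2 + (b t - c t)^2)^2).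
Proof.
  intro Hn.
  apply is_derive_Reals in Ha; apply is_derive_Reals in Hb; apply is_derive_Reals in Hc.
  apply is_derive_Reals. auto_derive.
  - repeat split; try (eexists; eassumption). replace (a t * (a t * 1) + (b t + - c t) * ((b t + - c t) * 1)) with (a t ^2 + (b t - c t)^2) by ring. exact Hn.
  - rwD Ha. rwD Hb. rwD Hc. field. exact Hn.
Qed.

Lemma d_V (T1 K : R) : a t <> 0 -> K <> 0 ->
  derivable_pt_lim (fun t => (b t - c t)^2 / a t ^2 * (1 + (t - T1)/K)) t
   ((2*(b t - c t)*(B - C)*(a t)^2 - (b t - c t)^2*(2*a t*A))/(a t)^4 * (1 + (t - T1)/K)
     + (b t - c t)^2 / a t ^2 / K).
Proof.
  intros Hn HK.
  apply is_derive_Reals in Ha; apply is_derive_Reals in Hb; apply is_derive_Reals in Hc.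
  apply is_derive_Reals. auto_derive.
  - repeat split; try (eexists; eassumption); try exact HK. intro H0. apply Hn. nra.
  - rwD Ha. rwD Hb. rwD Hc. field. split; assumption.
Qed.

Lemma d_H : derivable_pt_lim (fun t => b t * c t - t/6) t (B * c t + b t * C - 1/6).
Proof.
  apply is_derive_Reals in Ha; apply is_derive_Reals in Hb; apply is_derive_Reals in Hc.
  apply is_derive_Reals. auto_derive.
  - repeat split; eexists; eassumption.
  - rwD Hb. rwD Hc. field.
Qed.
End T.


Definition Af x y z := - q_poly (-x) y z * x / (6*(x*y*z)^2).
Definition Bf x y z := - q_poly y (-x) z * y / (6*(x*y*z)^2).
Definition Cf x y z := - q_poly z (-x) y * z / (6*(x*y*z)^2).

Definition gE u v := 3*v + 13/2*v^2 + 1/2*v^3 + 4*u*v + 2*u*v^2 - 5*u^2*v - u^2*v^2 - 4*u^3*v + 1/2*u^4 - 13/2*u^4*v + 6*u^5 + 10*u^6.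
Definition gN u v := 3*v + 5*v^2 + 4*u*v + 2*u*v^2 - 13/2*u^2*v - 3/2*u^2*v^2 + 1/2*u^4 - 1/2*u^4*v + 10*u^5 + 16*u^6.

Lemma gE_nonneg u v : 0 <= u -> 0 <= v -> v <= 1 -> 0 <= gE u v.
Proof. intros. unfold gE.
assert (H3: 0 <= v*(1-v)) by nra.
assert (0 <= u*v) by nra.
assert (0 <= u^2*v*(1-v)) by (apply Rmult_le_pos; nra).
assert (0 <= u^4*(1-v)) by (apply Rmult_le_pos; nra).
assert (0 <= u^3*(1-v)) by (apply Rmult_le_pos; nra).
assert (0 <= u^5) by (apply pow_le; lra).
assert (0 <= u^4*v) by (apply Rmult_le_pos; [apply pow_le|]; lra).
assert (0 <= u^3*v) by (apply Rmult_le_pos; [apply pow_le|]; lra).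
assert (0 <= u^2*v) by (apply Rmult_le_pos; [apply pow_le|]; lra).
nra. Qed.

Lemma gN_nonneg u v : 0 <= u -> 0 <= v -> v <= 1 -> 0 <= gN u v.
Proof. intros. unfold gN.
assert (H3: 0 <= v*(1-v)) by nra.
assert (0 <= u*v) by nra.
assert (0 <= u^2*v*(1-v)) by (apply Rmult_le_pos; nra).
assert (0 <= u^4*(1-v)) by (apply Rmult_le_pos; nra).
assert (0 <= u^3*(1-v)) by (apply Rmult_le_pos; nra).
assert (0 <= u^5) by (apply pow_le; lra).
assert (0 <= u^4*v) by (apply Rmult_le_pos; [apply pow_le|]; lra).
assert (0 <= u^3*v) by (apply Rmult_le_pos; [apply pow_le|]; lra).
assert (0 <= u^2*v) by (apply Rmult_le_pos; [apply pow_le|]; lra).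
nra. Qed.

Lemma K1_id x y z : 0 < x -> 0 < y -> 0 < z ->
  2*x*Af x y z + 2*(y-z)*(Bf x y z - Cf x y z) =
  - ((y+z)^6 * gE (x/(y+z)) ((y-z)^2/(y+z)^2)) / (6*(x*y*z)^2).
Proof. intros. unfold Af, Bf, Cf, gE, q_poly. field. lra. Qed.

Lemma K2_id x y z : 0 < x -> 0 < y -> 0 < z ->
  (Bf x y z * z + y * Cf x y z) * (x^2 + (y-z)^2) - y*z*(2*x*Af x y z + 2*(y-z)*(Bf x y z - Cf x y z))
  = (x^2+(y-z)^2)/3 + (y+z)^6 * gN (x/(y+z)) ((y-z)^2/(y+z)^2) / (6*x^2*y*z).
Proof. intros. unfold Af, Bf, Cf, gN, q_poly. field. lra. Qed.

Definition Pw x s m := 16*x^4 + 8*x^3*s + 4*x^2*m - 8*x*(s^3-2*m*s) - 4*(4*s^4-15*s^2*m+8*m^2).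

Lemma K3_id x y z : 0 < x -> 0 < y -> 0 < z ->
  (2*(y-z)*(Bf x y z - Cf x y z)*x^2 - (y-z)^2*(2*x*Af x y z))/x^4
  = (y-z)^2 * Pw x (y+z) (y*z) / (6*x^4*(y*z)^2).
Proof. intros. unfold Af, Bf, Cf, Pw, q_poly. field. lra. Qed.

Lemma Pw_bound x s m : 0 < x -> 0 < m -> 0 < s -> 4*m <= s^2 -> x^2 <= m -> Pw x s m <= -28*m^2.
Proof. intros. unfold Pw.
assert (x^4 <= m^2) by nra.
assert (x^3*s <= x*m*s) by (assert (0 < x*s) by nra; nra).
assert (x*m*s <= x*(s^3-2*m*s)) by (assert (0<x*s) by nra; nra).
assert (48*m^2 <= 4*(4*s^4-15*s^2*m+8*m^2)) by nra.
nra. Qed.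

Lemma K4_id x y z : 0 < x -> 0 < y -> 0 < z ->
  Bf x y z * z + y * Cf x y z =
  (6*x^4+4*x^3*(y+z))/(6*x^2*(y*z)) + 1/3 - ((y-z)^2/x^2)*((y-z)^2/(y*z)+3)/3.
Proof. intros. unfold Af, Bf, Cf, q_poly. field. lra. Qed.

Lemma div_nonneg x y : 0 <= x -> 0 < y -> 0 <= x / y.
Proof. intros. unfold Rdiv. apply Rmult_le_pos; [lra | left; apply Rinv_0_lt_compat; lra]. Qed.

Lemma v_bounds y z : 0 < y -> 0 < z -> 0 <= (y-z)^2/(y+z)^2 <= 1.
Proof. intros. split. apply div_nonneg. apply pow2_ge_0. apply pow_lt; lra.
  apply Rmult_le_reg_r with ((y+z)^2). nra. unfold Rdiv. rewrite Rmult_assoc, Rinv_l. nra. nra. Qed.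

Lemma K1 x y z : 0<x->0<y->0<z -> 2*x*Af x y z + 2*(y-z)*(Bf x y z - Cf x y z) <= 0.
Proof. intros. rewrite K1_id by lra.
  destruct (v_bounds y z) as [Hv1 Hv2]; try lra.
  assert (0 <= gE (x/(y+z)) ((y-z)^2/(y+z)^2)) by (apply gE_nonneg; try lra; apply div_nonneg; lra).
  assert (0 <= (y+z)^6 * gE (x/(y+z)) ((y-z)^2/(y+z)^2) / (6*(x*y*z)^2)).
  { apply div_nonneg. apply Rmult_le_pos; [apply pow_le; lra | lra]. 
    assert (0 < x*y*z) by (apply Rmult_lt_0_compat; nra). nra. }
  unfold Rdiv in *. lra. Qed.

Lemma K2 x y z : 0<x->0<y->0<z ->
  ((Bf x y z * z + y * Cf x y z) * (x^2 + (y-z)^2) - y*z*(2*x*Af x y z + 2*(y-z)*(Bf x y z - Cf x y z)))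
     / (x^2 + (y-z)^2)^2 >= 1 / (3 * (x^2 + (y-z)^2)).
Proof. intros. rewrite K2_id by lra.
  destruct (v_bounds y z) as [Hv1 Hv2]; try lra.
  assert (0 <= gN (x/(y+z)) ((y-z)^2/(y+z)^2)) by (apply gN_nonneg; try lra; apply div_nonneg; lra).
  set (g := gN _ _) in *.
  assert (0 <= (y+z)^6 * g / (6*x^2*y*z)).
  { apply div_nonneg. apply Rmult_le_pos; [apply pow_le; lra | lra]. 
    assert (0<x^2) by (apply pow_lt; lra). assert (0 < x^2*y*z) by (repeat apply Rmult_lt_0_compat; lra). lra. }
  set (h := (y+z)^6 * g / (6*x^2*y*z)) in *.
  set (P := x^2 + (y-z)^2). assert (0 < P) by (unfold P; assert (0<x^2) by (apply pow_lt; lra); pose proof (pow2_ge_0 (y-z)); lra).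
  apply Rle_ge. apply Rmult_le_reg_r with (P^2). nra.
  unfold Rdiv. rewrite (Rmult_assoc _ (/ P^2)), Rinv_l by nra.
  replace (1 * / (3*P) * P^2) with (P/3) by (field; lra). nra. Qed.

Lemma K3 x y z K tau : 0<x->0<y->0<z -> x^2 <= y*z -> x^2 <= K -> 0 <= tau ->
  (2*(y-z)*(Bf x y z - Cf x y z)*x^2 - (y-z)^2*(2*x*Af x y z))/x^4 * (1 + tau/K)
     + (y-z)^2 / x^2 / K <= 0.
Proof. intros. rewrite K3_id by lra.
  assert (Hp : Pw x (y+z) (y*z) <= -28*(y*z)^2) by (apply Pw_bound; [lra | apply Rmult_lt_0_compat; lra | lra | pose proof (pow2_ge_0 (y-z)); nra | lra]).
  assert (0 < K) by nra.
  set (D := (y-z)^2). assert (0 <= D) by (unfold D; apply pow2_ge_0).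
  set (P := Pw x (y+z) (y*z)) in *.
  assert (Hq : D * P / (6*x^4*(y*z)^2) <= - (14/3) * D / x^4).
  { assert (0<x^4) by (apply pow_lt; lra). assert (0 < y*z) by (apply Rmult_lt_0_compat; lra).
    assert (0 < (y*z)^2) by (apply pow_lt; lra).
    assert (0 < 6*x^4*(y*z)^2) by (repeat apply Rmult_lt_0_compat; lra).
    assert (D*P <= D*(-28*(y*z)^2)) by (apply Rmult_le_compat_l; lra).
    assert (D*P/(6*x^4*(y*z)^2) <= D*(-28*(y*z)^2)/(6*x^4*(y*z)^2)).
    { unfold Rdiv. apply Rmult_le_compat_r; [left; apply Rinv_0_lt_compat; lra | lra]. }
    replace (-(14/3)*D/x^4) with (D*(-28*(y*z)^2)/(6*x^4*(y*z)^2)) by (field; lra). lra. }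
  assert (Hr : - (14/3) * D / x^4 <= - (D / x^2 / K)).
  { assert (0 < x^2) by (apply pow_lt; lra).
    replace (-(14/3)*D/x^4) with (-(14/3)*(D/x^2)/x^2) by (field; lra).
    assert (0 <= D/x^2) by (apply div_nonneg; lra). set (w := D/x^2) in *.
    assert (w/K <= (14/3)*w/x^2). { 
      replace (w/K) with (w*x^2/(K*x^2)) by (field; lra).
      replace ((14/3)*w/x^2) with ((14/3)*w*K/(K*x^2)) by (field; lra).
      unfold Rdiv. apply Rmult_le_compat_r. left; apply Rinv_0_lt_compat; apply Rmult_lt_0_compat; lra.
      assert (w*x^2 <= w*K) by (apply Rmult_le_compat_l; lra). assert (0 <= w*K) by (apply Rmult_le_pos; lra). lra. }
    unfold Rdiv in *. lra. }
  assert (0 <= tau/K) by (apply div_nonneg; lra).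
  assert (0 <= D/x^2/K) by (apply div_nonneg; [apply div_nonneg; [lra| apply pow_lt; lra]|lra]).
  set (u := D/x^2/K) in *. set (dd := D * P / (6*x^4*(y*z)^2)) in *.
  assert (dd <= - u) by lra.
  assert (dd * (1 + tau/K) <= -u * (1 + tau/K)) by (apply Rmult_le_compat_r; lra).
  nra. Qed.

Lemma K4 x y z : 0<x->0<y->0<z ->
  Bf x y z * z + y * Cf x y z >= 1/3 - ((y-z)^2/x^2)*((y-z)^2/(y*z)+3)/3.
Proof. intros. rewrite K4_id by lra.
  assert (0 <= (6*x^4+4*x^3*(y+z))/(6*x^2*(y*z))).
  { apply div_nonneg. assert (0<x^3) by (apply pow_lt; lra). assert (0 < x^4) by (apply pow_lt; lra). nra.
    assert (0 < x^2) by nra. assert (0 < y*z) by nra. nra. }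
  lra. Qed.

Lemma abs_sq X e : 0 < e -> X^2 < e^2 -> Rabs X < e.
Proof. intros. unfold Rabs. destruct (Rcase_abs X); nra. Qed.

Lemma sq_div N Dn e : 0 < Dn -> N^2 < e^2*Dn^2 -> (N/Dn)^2 < e^2.
Proof. intros. replace ((N/Dn)^2) with (N^2/Dn^2) by (field; lra).
  apply Rmult_lt_reg_r with (Dn^2). apply pow_lt; lra.
  unfold Rdiv. rewrite Rmult_assoc, Rinv_l. lra. apply pow_nonzero; lra. Qed.

Lemma T22 p q r e : 0<p -> 0<q -> 0<r -> 0<e ->
  4*(p^2+(q-r)^2) <= e^2*(q*r) -> 16*(q-r)^2 <= e^2*p^2 -> p^2+(q-r)^2 < q*r ->
  Rabs (Ric22 p q r - -1) < e.
Proof. intros Hp Hq Hr He H1 H2 H3. apply abs_sq; auto.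
  replace (Ric22 p q r - -1) with (((q-r)*(q+r) - p^2)/(2*p*r)) by (unfold Ric22; field; lra).
  apply sq_div. nra.
  assert (Hq3 : q < 3*r) by nra.
  assert (Hs : (q+r)^2 < 16*r^2) by nra.
  assert (Hp2 : 4*p^2 <= e^2*(q*r)) by (pose proof (pow2_ge_0 (q-r)); nra).
  assert (((q-r)*(q+r) - p^2)^2 <= 2*(q-r)^2*(q+r)^2 + 2*p^4) by (pose proof (pow2_ge_0 ((q-r)*(q+r)+p^2)); nra).
  assert (2*(q-r)^2*(q+r)^2 <= 2*(e^2*p^2/16)*(16*r^2)).
  { assert (0 <= (q-r)^2) by apply pow2_ge_0. assert (0 <= (q+r)^2) by apply pow2_ge_0.
    assert ((q-r)^2 <= e^2*p^2/16) by lra.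
    assert ((q+r)^2 <= 16*r^2) by lra.
    assert (0 <= e^2*p^2/16) by (pose proof (pow2_ge_0 e); pose proof (pow2_ge_0 p); nra).
    apply Rmult_le_compat; nra. }
  assert (2*p^4 < 2*p^2*(e^2*3*r^2/4)).
  { assert (0 < p^2) by (apply pow_lt; lra). assert (0<e^2) by (apply pow_lt; lra).
    assert (4*p^2 < e^2*3*r^2) by nra.
    replace (2*p^4) with (2*p^2*p^2) by ring. nra. }
  nra. Qed.

Lemma T11 p q r e : 0<p -> 0<q -> 0<r -> 0<e ->
  12 <= e^2*(q*r) -> 8*(q-r)^2 <= p^2 -> p^2+(q-r)^2 < q*r ->
  Rabs (Ric11 p q r / p - 0) < e.
Proof. intros Hp Hq Hr He H1 H2 H3. apply abs_sq; auto.
  replace (Ric11 p q r / p - 0) with ((p^2 - (q-r)^2)/(2*p*(q*r))) by (unfold Ric11; field; lra).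
  apply sq_div. assert (0<q*r) by nra. nra.
  set (D := (q-r)^2) in *. set (m := q*r) in *. assert (0 <= D) by apply pow2_ge_0.
  assert (0 < m) by (unfold m; nra). assert (0 < p^2) by (apply pow_lt; lra).
  assert ((p^2-D)^2 <= (p^2+D)^2) by nra.
  assert ((p^2+D)^2 <= (p^2+D)*(9/8*p^2)) by nra.
  assert ((p^2+D)*(9/8*p^2) <= m*(9/8*p^2)) by nra.
  assert (9/8*p^2*m < e^2*(2*p*m)^2).
  { replace (e^2*(2*p*m)^2) with (4*p^2*m*(e^2*m)) by ring.
    assert (0 < p^2*m) by nra. nra. }
  nra. Qed.

Lemma TS p q r e : 0<p -> 0<q -> 0<r -> 0<e ->
  12 <= e^2*(q*r) -> 8*(q-r)^2 <= p^2 -> p^2+(q-r)^2 < q*r ->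
  Rabs (Scal p q r - 0) < e.
Proof. intros Hp Hq Hr He H1 H2 H3. apply abs_sq; auto.
  replace (Scal p q r - 0) with ((-((q-r)^2 + p^2 + 2*p*(q+r)))/(2*p*(q*r))) by (unfold Scal; field; lra).
  apply sq_div. assert (0<q*r) by nra. nra.
  assert (Hs : (q+r)^2 = (q-r)^2 + 4*(q*r)) by ring.
  set (D := (q-r)^2) in *. set (m := q*r) in *. assert (0 <= D) by apply pow2_ge_0.
  assert (0 < m) by (unfold m; nra). assert (0 < p^2) by (apply pow_lt; lra).
  set (s := q+r) in *.
  assert ((-(D + p^2 + 2*p*s))^2 <= 2*(p^2+D)^2 + 8*p^2*s^2) by (pose proof (pow2_ge_0 (D+p^2-2*p*s)); nra).
  assert ((p^2+D)^2 <= (p^2+D)*(9/8*p^2)) by nra.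
  assert ((p^2+D)*(9/8*p^2) <= m*(9/8*p^2)) by nra.
  assert (p^2*s^2 <= p^2*(5*m)) by (apply Rmult_le_compat_l; lra).
  assert (43*p^2*m < e^2*(2*p*m)^2).
  { replace (e^2*(2*p*m)^2) with (4*p^2*m*(e^2*m)) by ring.
    assert (0 < p^2*m) by nra. nra. }
  nra. Qed.

Lemma le_div_l x y z : 0 < y -> x <= z*y -> x/y <= z.
Proof. intros. replace z with (z*y/y) by (field; lra). unfold Rdiv. apply Rmult_le_compat_r; [left; apply Rinv_0_lt_compat|]; lra. Qed.
Lemma le_div_r x y z : 0 < y -> x*y <= z -> x <= z/y.
Proof. intros. replace x with (x*y/y) by (field; lra). unfold Rdiv. apply Rmult_le_compat_r; [left; apply Rinv_0_lt_compat|]; lra. Qed.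

Lemma mono_lin (f f' : R -> R) (T0 k : R) :
  (forall t, T0 <= t -> derivable_pt_lim f t (f' t)) ->
  (forall t, T0 <= t -> k <= f' t) ->
  forall s t, T0 <= s -> s <= t -> f s + k*(t-s) <= f t.
Proof.
  intros Hd Hn s t Hs Hst. destruct (Req_dec s t) as [->|Hne]; [lra|].
  destruct (MVT_cor2 f f' s t) as [c [Hc1 Hc2]]; [lra| intros; apply Hd; lra |].
  assert (k <= f' c) by (apply Hn; lra). nra.
Qed.

Lemma d_bc (b c : R -> R) B C t : derivable_pt_lim b t B -> derivable_pt_lim c t C ->
  derivable_pt_lim (fun t => b t * c t) t (B * c t + b t * C).
Proof. intros Hb Hc.
  apply is_derive_Reals in Hb; apply is_derive_Reals in Hc.
  apply is_derive_Reals. auto_derive.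
  - repeat split; eexists; eassumption.
  - rwD Hb. rwD Hc. ring.
Qed.

Section Main.
Variables a b c : R -> R.
Hypothesis Hpos : forall t, 0 <= t -> 0 < a t /\ 0 < b t /\ 0 < c t.
Hypothesis Da : forall t, 0 <= t -> derivable_pt_lim a t (Af (a t) (b t) (c t)).
Hypothesis Db : forall t, 0 <= t -> derivable_pt_lim b t (Bf (a t) (b t) (c t)).
Hypothesis Dc : forall t, 0 <= t -> derivable_pt_lim c t (Cf (a t) (b t) (c t)).

Lemma Phi_pos t : 0 <= t -> 0 < a t^2 + (b t - c t)^2.
Proof. intros. destruct (Hpos t H) as (?&?&?). assert (0 < a t^2) by (apply pow_lt; lra).
  pose proof (pow2_ge_0 (b t - c t)). lra. Qed.

Lemma S1 t : 0 <= t -> a t^2 + (b t - c t)^2 <= a 0^2 + (b 0 - c 0)^2.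
Proof. intros Ht.
  apply (mono_dec (fun t => a t^2 + (b t - c t)^2)
    (fun t => 2*a t*Af (a t) (b t) (c t) + 2*(b t - c t)*(Bf (a t) (b t) (c t) - Cf (a t) (b t) (c t))) 0); try lra.
  - intros. apply d_Phi; auto.
  - intros. destruct (Hpos t0 H) as (?&?&?). apply K1; auto.
Qed.

Lemma S2 t : 0 <= t -> b 0 * c 0 / (a 0^2 + (b 0 - c 0)^2) + /(3*(a 0^2 + (b 0 - c 0)^2)) * (t - 0)
   <= b t * c t / (a t^2 + (b t - c t)^2).
Proof. intros Ht.
  apply (mono_lin (fun t => b t * c t / (a t^2 + (b t - c t)^2))
   (fun t => (((Bf (a t) (b t) (c t)) * c t + b t * (Cf (a t) (b t) (c t))) * (a t ^2 + (b t - c t)^2) - b t * c t * (2*a t*(Af (a t) (b t) (c t)) + 2*(b t - c t)*((Bf (a t) (b t) (c t))-(Cf (a t) (b t) (c t)))))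
     / (a t ^2 + (b t - c t)^2)^2) 0); try lra.
  - intros. apply d_G; auto. pose proof (Phi_pos t0 H). lra.
  - intros t0 H. destruct (Hpos t0 H) as (?&?&?).
    pose proof (K2 (a t0) (b t0) (c t0) H0 H1 H2).
    pose proof (S1 t0 H). pose proof (Phi_pos t0 H).
    assert (/ (3 * (a 0 ^ 2 + (b 0 - c 0) ^ 2)) <= 1 / (3 * (a t0 ^ 2 + (b t0 - c t0) ^ 2))).
    { unfold Rdiv. rewrite Rmult_1_l. apply Rinv_le_contravar; lra. }
    lra.
Qed.


Let C0 := a 0^2 + (b 0 - c 0)^2.
Lemma C0_pos : 0 < C0. Proof. unfold C0. apply (Phi_pos 0). lra. Qed.
Let T1 := 3*C0.

Lemma G_aux t : 0 <= t -> b 0 * c 0 / C0 + /(3*C0)*t <= b t * c t / (a t^2 + (b t - c t)^2).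
Proof. intros Ht. pose proof (S2 t Ht) as H. fold C0 in H. rewrite Rminus_0_r in H. exact H. Qed.

Lemma G0_pos : 0 < b 0 * c 0 / C0.
Proof. pose proof C0_pos. destruct (Hpos 0 (Rle_refl 0)) as (Ha0&Hb0&Hc0).
  apply Rdiv_lt_0_compat; [nra|lra]. Qed.

Lemma G_lb t : 0 <= t -> t * (a t^2 + (b t - c t)^2) <= 3*C0 * (b t * c t).
Proof. intros Ht. pose proof (G_aux t Ht) as H. pose proof C0_pos as HC.
  pose proof (Phi_pos t Ht) as HP. pose proof G0_pos as HG.
  set (P := a t ^ 2 + (b t - c t) ^ 2) in *. set (m := b t * c t) in *.
  assert (E : /(3*C0)*t <= m/P) by lra.
  apply (Rmult_le_compat_r P) in E; [|lra]. replace (m/P*P) with m in E by (field; lra).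
  apply (Rmult_le_compat_l (3*C0)) in E; [|lra].
  replace (3 * C0 * (/ (3 * C0) * t * P)) with (t*P) in E by (field; lra). lra.
Qed.

Lemma S3 t : T1 <= t -> a t^2+(b t-c t)^2 < b t * c t.
Proof. intros Ht. unfold T1 in Ht. pose proof C0_pos as HC.
  assert (Ht0 : 0 <= t) by lra. pose proof (G_aux t Ht0) as H. pose proof (Phi_pos t Ht0) as HP.
  pose proof G0_pos as HG.
  set (P := a t ^ 2 + (b t - c t) ^ 2) in *.
  assert (E1 : 1 <= /(3*C0)*t). { apply Rmult_le_reg_l with (3*C0). lra.
     rewrite <- Rmult_assoc, Rinv_r by lra. lra. }
  assert (E2 : 1 < b t * c t / P) by lra.
  apply (Rmult_lt_compat_r P) in E2; [|lra]. replace (b t * c t / P * P) with (b t * c t) in E2 by (field; lra). lra.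
Qed.

Let W1 := (b T1 - c T1)^2/a T1^2.

Lemma T1_pos : 0 <= T1. Proof. unfold T1. pose proof C0_pos. lra. Qed.

Lemma S4 t : T1 <= t -> (b t - c t)^2/a t^2 * (1 + (t-T1)/C0) <= W1.
Proof. intros Ht. pose proof C0_pos as HC. pose proof T1_pos as HT.
  destruct (Hpos T1 HT) as (HaT&HbT&HcT).
  replace W1 with ((b T1 - c T1)^2/a T1^2 * (1 + (T1-T1)/C0)) by (unfold W1; field; split; lra).
  apply (mono_dec (fun t => (b t - c t)^2/a t^2 * (1 + (t-T1)/C0))
    (fun t => (2*(b t - c t)*(Bf (a t) (b t) (c t) - Cf (a t) (b t) (c t))*(a t)^2 - (b t - c t)^2*(2*a t*Af (a t) (b t) (c t)))/(a t)^4 * (1 + (t - T1)/C0)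
     + (b t - c t)^2 / a t ^2 / C0) T1); try lra.
  - intros t0 Ht0. destruct (Hpos t0 ltac:(lra)) as (Ha0&Hb0&Hc0). apply d_V; try apply Da; try apply Db; try apply Dc; lra.
  - intros t0 Ht0. destruct (Hpos t0 ltac:(lra)) as (Ha0&Hb0&Hc0).
    pose proof (S3 t0 Ht0) as E1. pose proof (S1 t0 ltac:(lra)) as E2. fold C0 in E2.
    pose proof (pow2_ge_0 (b t0 - c t0)).
    apply K3; auto; lra.
Qed.

Lemma W1_nonneg : 0 <= W1.
Proof. unfold W1. pose proof T1_pos as HT. destruct (Hpos T1 HT) as (?&?&?). apply div_nonneg. apply pow2_ge_0. apply pow_lt; lra. Qed.

Lemma W_bound t d : 0 < d -> T1 + 16*W1*C0/d <= t -> 16*(b t - c t)^2 <= d * a t^2.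
Proof. intros Hd Ht. pose proof C0_pos as HC. pose proof W1_nonneg as HW. pose proof T1_pos as HT.
  assert (E0 : 0 <= 16*W1*C0/d) by (apply div_nonneg; [nra|lra]).
  pose proof (S4 t ltac:(lra)) as E1.
  destruct (Hpos t ltac:(lra)) as (Ha0&Hb0&Hc0). assert (Ha2 : 0 < a t^2) by (apply pow_lt; lra).
  set (w := (b t - c t)^2/a t^2) in *.
  assert (Hw : 0 <= w) by (apply div_nonneg; [apply pow2_ge_0 | lra]).
  assert (E2 : 16*W1/d <= (t-T1)/C0).
  { apply le_div_r. lra. replace (16*W1/d*C0) with (16*W1*C0/d) by (field; lra). lra. }
  assert (E3 : w*(1+16*W1/d) <= W1).
  { assert (w*(1+16*W1/d) <= w*(1 + (t-T1)/C0)) by (apply Rmult_le_compat_l; lra). lra. }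
  assert (E4 : 16*w <= d).
  { replace (w*(1+16*W1/d)) with (w + 16*(w*W1)/d) in E3 by (field; lra).
    destruct (Rle_dec (16*w) d) as [|Hn]; auto. exfalso.
    assert (16*(w*W1)/d >= W1).
    { apply Rle_ge. apply le_div_r. lra. nra. }
    assert (w > 0) by nra. lra. }
  replace (16*(b t - c t)^2) with (16*w*a t^2) by (unfold w; field; lra). nra.
Qed.

Let T2 := T1 + 8*W1*C0.

Lemma T2_ge : T1 <= T2. Proof. unfold T2. pose proof W1_nonneg. pose proof C0_pos. nra. Qed.

Lemma S5 t : T2 <= t -> 8*(b t - c t)^2 <= a t^2.
Proof. intros Ht. pose proof (W_bound t 2 ltac:(lra)). unfold T2 in Ht.
  replace (16*W1*C0/2) with (8*W1*C0) in H by field. lra. Qed.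

Lemma S6 t : T2 <= t -> b T2 * c T2 + 1/6*(t-T2) <= b t * c t.
Proof. intros Ht. pose proof T2_ge. pose proof T1_pos.
  apply (mono_lin (fun t => b t * c t) (fun t => Bf (a t) (b t) (c t) * c t + b t * Cf (a t) (b t) (c t)) T2); try lra.
  - intros t0 Ht0. apply d_bc; [apply Db | apply Dc]; lra.
  - intros t0 Ht0. destruct (Hpos t0 ltac:(lra)) as (Ha0&Hb0&Hc0).
    pose proof (K4 _ _ _ Ha0 Hb0 Hc0) as E.
    pose proof (S5 t0 Ht0) as E1. pose proof (S3 t0 ltac:(lra)) as E2.
    assert (Ha2 : 0 < a t0^2) by (apply pow_lt; lra). assert (Hm : 0 < b t0 * c t0) by nra.
    set (D := (b t0 - c t0)^2) in *. assert (HD : 0 <= D) by apply pow2_ge_0.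
    assert (Ew : D/a t0^2 <= 1/8).
    { apply le_div_l; lra. }
    assert (Ez : D/(b t0 * c t0) <= 1).
    { apply le_div_l; lra. }
    assert (0 <= D/a t0^2) by (apply div_nonneg; lra).
    assert (0 <= D/(b t0 * c t0)) by (apply div_nonneg; lra).
    set (w := D/a t0^2) in *. set (z := D/(b t0*c t0)) in *. nra.
Qed.

Definition Tf e := T2 + 72/e^2 + 12*C0/e^2 + 16*W1*C0/e^2.

Lemma Pfacts t e : 0 < e -> Tf e <= t ->
  0 < a t /\ 0 < b t /\ 0 < c t /\
  4*(a t^2+(b t-c t)^2) <= e^2*(b t*c t) /\ 16*(b t-c t)^2 <= e^2*a t^2 /\
  12 <= e^2*(b t*c t) /\ 8*(b t - c t)^2 <= a t^2 /\ a t^2+(b t-c t)^2 < b t*c t.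
Proof. intros He Ht. unfold Tf in Ht.
  pose proof C0_pos as HC. pose proof W1_nonneg as HW. pose proof T2_ge as HT2. pose proof T1_pos as HT1.
  assert (He2 : 0 < e^2) by (apply pow_lt; lra).
  assert (A1 : 0 <= 72/e^2) by (apply div_nonneg; lra).
  assert (A2 : 0 <= 12*C0/e^2) by (apply div_nonneg; lra).
  assert (A3 : 0 <= 16*W1*C0/e^2) by (apply div_nonneg; [nra|lra]).
  destruct (Hpos t ltac:(lra)) as (Ha0&Hb0&Hc0).
  repeat split; try assumption.
  - pose proof (G_lb t ltac:(lra)) as G. 
    assert (E : 12*C0 <= e^2*t).
    { assert (12*C0/e^2 <= t) by lra. apply (Rmult_le_compat_l (e^2)) in H; [|lra].
      replace (e^2*(12*C0/e^2)) with (12*C0) in H by (field; lra). lra. }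
    pose proof (Phi_pos t ltac:(lra)) as HP.
    set (P := a t ^ 2 + (b t - c t) ^ 2) in *. set (m := b t * c t) in *.
    assert (12*C0*P <= e^2*t*P) by (apply Rmult_le_compat_r; lra).
    assert (e^2*(t*P) <= e^2*(3*C0*m)) by (apply Rmult_le_compat_l; lra).
    nra.
  - apply W_bound. lra. lra.
  - pose proof (S6 t ltac:(lra)) as E. destruct (Hpos T2 ltac:(lra)) as (?&?&?).
    assert (E2 : 72/e^2 <= t - T2) by lra.
    apply (Rmult_le_compat_l (e^2)) in E2; [|lra].
    replace (e^2*(72/e^2)) with 72 in E2 by (field; lra).
    assert (0 < b T2 * c T2) by nra. nra.
  - apply S5. lra.
  - apply S3. lra.
Qed.

Lemma final :
  tends_at_infty (fun t => Ric11 (a t) (b t) (c t) / a t) 0 /\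
  tends_at_infty (fun t => Ric22 (a t) (b t) (c t)) (-1) /\
  tends_at_infty (fun t => Ric33 (a t) (b t) (c t)) (-1) /\
  tends_at_infty (fun t => Scal (a t) (b t) (c t)) 0.
Proof.
  repeat split; intros e He; exists (Tf e); intros t Ht;
  destruct (Pfacts t e He ltac:(lra)) as (Ha0&Hb0&Hc0&P1&P2&P3&P4&P5).
  - apply T11; auto.
  - apply T22; auto.
  - change (Ric33 (a t) (b t) (c t)) with (Ric22 (a t) (c t) (b t)).
    apply T22; auto.
    + replace ((c t - b t)^2) with ((b t - c t)^2) by ring. replace (c t * b t) with (b t * c t) by ring. lra.
    + replace ((c t - b t)^2) with ((b t - c t)^2) by ring. lra.
    + replace ((c t - b t)^2) with ((b t - c t)^2) by ring. replace (c t * b t) with (b t * c t) by ring. lra.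
  - apply TS; auto.
Qed.

End Main.
Lemma pos_keep (f f' : R -> R) : (forall s, 0 <= s -> derivable_pt_lim f s (f' s)) ->
  0 < f 0 -> (forall s, 0 <= s -> f s <> 0) -> forall t, 0 <= t -> 0 < f t.
Proof. intros Hd H0 Hn t Ht. destruct (Rlt_le_dec 0 (f t)) as [|Hle]; auto. exfalso.
  assert (Hlt : f t < 0) by (pose proof (Hn t Ht); lra).
  assert (Htp : 0 < t) by (destruct (Req_dec t 0) as [->|]; lra).
  destruct (Ranalysis5.IVT_interv (fun s => - f s) 0 t) as [z [Hz1 Hz2]].
  - intros s Hs. apply continuity_pt_opp. apply derivable_continuous_pt. exists (f' s). apply Hd. lra.
  - exact Htp.
  - lra.
  - lra.
  - apply (Hn z). lra. lra.
Qed.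

Lemma d_prod4 (f g h k : R -> R) F G H K t : derivable_pt_lim f t F -> derivable_pt_lim g t G ->
  derivable_pt_lim h t H -> derivable_pt_lim k t K ->
  derivable_pt_lim (fun t => f t * g t * h t * k t) t (F*g t*h t*k t + f t*G*h t*k t + f t*g t*H*k t + f t*g t*h t*K).
Proof. intros Hf Hg Hh Hk.
  apply is_derive_Reals in Hf; apply is_derive_Reals in Hg; apply is_derive_Reals in Hh; apply is_derive_Reals in Hk.
  apply is_derive_Reals. auto_derive.
  - repeat split; eexists; eassumption.
  - rwD Hf. rwD Hg. rwD Hh. rwD Hk. ring.
Qed.

Theorem proposition5p14
  (h00 h11 h22 h33 : R) (g00 g11 g22 g33 : R -> R)
  (Hh00 : 0 < h00) (Hh11 : 0 < h11) (Hh22 : 0 < h22) (Hh33 : 0 < h33)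
  (Hi00 : g00 0 = h00) (Hi11 : g11 0 = h11) (Hi22 : g22 0 = h22) (Hi33 : g33 0 = h33)
  (Hd00 : forall t, 0 <= t -> derivable_pt_lim g00 t
     (- beta_of h00 h11 h22 h33 * p_poly (- g11 t) (g22 t) (g33 t) * (g00 t)^3))
  (Hd11 : forall t, 0 <= t -> derivable_pt_lim g11 t
     (- beta_of h00 h11 h22 h33 * q_poly (- g11 t) (g22 t) (g33 t) * (g00 t)^2 * g11 t))
  (Hd22 : forall t, 0 <= t -> derivable_pt_lim g22 t
     (- beta_of h00 h11 h22 h33 * q_poly (g22 t) (- g11 t) (g33 t) * (g00 t)^2 * g22 t))
  (Hd33 : forall t, 0 <= t -> derivable_pt_lim g33 t
     (- beta_of h00 h11 h22 h33 * q_poly (g33 t) (- g11 t) (g22 t) * (g00 t)^2 * g33 t)) :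
  tends_at_infty (fun t => Ric11 (g11 t) (g22 t) (g33 t) / g11 t) 0 /\
  tends_at_infty (fun t => Ric22 (g11 t) (g22 t) (g33 t)) (-1) /\
  tends_at_infty (fun t => Ric33 (g11 t) (g22 t) (g33 t)) (-1) /\
  tends_at_infty (fun t => Scal (g11 t) (g22 t) (g33 t)) 0.
Proof.
  set (Dh := h00*h11*h22*h33).
  assert (HD : 0 < Dh) by (unfold Dh; repeat apply Rmult_lt_0_compat; lra).
  set (beta := beta_of h00 h11 h22 h33) in *.
  assert (HK : forall t, 0 <= t -> derivable_pt_lim (fun t => g00 t * g11 t * g22 t * g33 t) t 0).
  { intros t Ht.
    match goal with |- derivable_pt_lim ?f t 0 =>
      assert (E : derivable_pt_lim f t
        ((- beta * p_poly (- g11 t) (g22 t) (g33 t) * (g00 t)^3) * g11 t * g22 t * g33 t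
         + g00 t * (- beta * q_poly (- g11 t) (g22 t) (g33 t) * (g00 t)^2 * g11 t) * g22 t * g33 t
         + g00 t * g11 t * (- beta * q_poly (g22 t) (- g11 t) (g33 t) * (g00 t)^2 * g22 t) * g33 t
         + g00 t * g11 t * g22 t * (- beta * q_poly (g33 t) (- g11 t) (g22 t) * (g00 t)^2 * g33 t)))
      by (apply d_prod4; auto) end.
    replace 0 with ((- beta * p_poly (- g11 t) (g22 t) (g33 t) * (g00 t)^3) * g11 t * g22 t * g33 t
         + g00 t * (- beta * q_poly (- g11 t) (g22 t) (g33 t) * (g00 t)^2 * g11 t) * g22 t * g33 t
         + g00 t * g11 t * (- beta * q_poly (g22 t) (- g11 t) (g33 t) * (g00 t)^2 * g22 t) * g33 t
         + g00 t * g11 t * g22 t * (- beta * q_poly (g33 t) (- g11 t) (g22 t) * (g00 t)^2 * g33 t)).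
    exact E. unfold p_poly, q_poly. ring. }
  assert (HKc : forall t, 0 <= t -> g00 t * g11 t * g22 t * g33 t = Dh).
  { intros t Ht.
    pose proof (mono_dec _ (fun _ => 0) 0 HK ltac:(intros; lra) 0 t ltac:(lra) Ht).
    pose proof (mono_lin _ (fun _ => 0) 0 0 HK ltac:(intros; lra) 0 t ltac:(lra) Ht).
    simpl in *. rewrite Hi00, Hi11, Hi22, Hi33 in *. unfold Dh. lra. }
  assert (Hnz : forall t, 0 <= t -> g00 t <> 0 /\ g11 t <> 0 /\ g22 t <> 0 /\ g33 t <> 0).
  { intros t Ht. pose proof (HKc t Ht). repeat split; intro Z; rewrite Z in H; lra. }
  assert (Hp11 : forall t, 0 <= t -> 0 < g11 t).
  { apply (pos_keep g11 _ Hd11). lra. intros; apply Hnz; auto. }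
  assert (Hp22 : forall t, 0 <= t -> 0 < g22 t).
  { apply (pos_keep g22 _ Hd22). lra. intros; apply Hnz; auto. }
  assert (Hp33 : forall t, 0 <= t -> 0 < g33 t).
  { apply (pos_keep g33 _ Hd33). lra. intros; apply Hnz; auto. }
  assert (Hg00 : forall t, 0 <= t -> g00 t = Dh / (g11 t * g22 t * g33 t)).
  { intros t Ht. pose proof (HKc t Ht). pose proof (Hp11 t Ht). pose proof (Hp22 t Ht). pose proof (Hp33 t Ht).
    rewrite <- H. field. repeat split; lra. }
  assert (Hb : beta = 1 / (6 * Dh^2)) by reflexivity.
  apply (final g11 g22 g33).
  - intros t Ht. auto.
  - intros t Ht. replace (Af (g11 t) (g22 t) (g33 t)) with
      (- beta * q_poly (- g11 t) (g22 t) (g33 t) * (g00 t)^2 * g11 t). auto.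
    rewrite Hb, (Hg00 t Ht). unfold Af. pose proof (Hp11 t Ht). pose proof (Hp22 t Ht). pose proof (Hp33 t Ht).
    field. repeat split; lra.
  - intros t Ht. replace (Bf (g11 t) (g22 t) (g33 t)) with
      (- beta * q_poly (g22 t) (- g11 t) (g33 t) * (g00 t)^2 * g22 t). auto.
    rewrite Hb, (Hg00 t Ht). unfold Bf. pose proof (Hp11 t Ht). pose proof (Hp22 t Ht). pose proof (Hp33 t Ht).
    field. repeat split; lra.
  - intros t Ht. replace (Cf (g11 t) (g22 t) (g33 t)) with
      (- beta * q_poly (g33 t) (- g11 t) (g22 t) * (g00 t)^2 * g33 t). auto.
    rewrite Hb, (Hg00 t Ht). unfold Cf. pose proof (Hp11 t Ht). pose proof (Hp22 t Ht). pose proof (Hp33 t Ht).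
    field. repeat split; lra.
Qed.
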